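(* For each $\nu\in\{1,\dots,5\}$ and each $Y$ in the domain of $Z^\nu_1$ (i.e. where $1-y_2z_1$, $z_1+z_3$, $y_2z_3+1$ are all nonzero), the $8\times 20$ Jacobian matrix $\dfrac{\partial Z^\nu_1}{\partial Y}(Y)$ has rank at most $5$.
   Context: Let $Y=(z_1,y_2,z_3,z_4,y_5,p_3,p_4,p_5,q_4,q_5,\kappa_1,\dots,\kappa_5)\in\mathbb R^{20}$, where $z_1,y_2,z_3,z_4,y_5,\kappa_1,\dots,\kappa_5\in\mathbb R$ and $p_3,p_4,p_5,q_4,q_5\in\mathbb R^2$. Set $\delta^0=(1,1)$, $\alpha_1=(-1,z_1)$, $\alpha_2=(y_2,-1)$, $\alpha_3=(1,z_3)$, $\alpha_4=(1,z_4)$, $\alpha_5=(y_5,1)$, and define $p_1=\frac{y_2z_3+1}{1-y_2z_1}p_3+\frac{y_2z_4+1}{1-y_2z_1}p_4+\frac{y_2+y_5}{1-y_2z_1}p_5$, $p_2=\frac{z_1+z_3}{1-y_2z_1}p_3+\frac{z_1+z_4}{1-y_2z_1}p_4+\frac{y_5z_1+1}{1-y_2z_1}p_5$, $q_1=\frac{(y_2z_4+1)(z_3-z_4)}{(z_1+z_3)(y_2z_1-1)}q_4+\frac{(y_2+y_5)(y_5z_3-1)}{(z_1+z_3)(y_2z_1-1)}q_5$, $q_2=-\frac{(z_1+z_4)(z_3-z_4)}{(y_2z_1-1)(y_2z_3+1)}q_4-\frac{(y_5z_1+1)(y_5z_3-1)}{(y_2z_1-1)(y_2z_3+1)}q_5$,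 $q_3=-\frac{(z_1+z_4)(y_2z_4+1)}{(z_1+z_3)(y_2z_3+1)}q_4-\frac{(y_2+y_5)(y_5z_1+1)}{(z_1+z_3)(y_2z_3+1)}q_5$. For $j=1,\dots,5$ let $C_j(Y)=\begin{pmatrix}p_j\\ (\alpha_j\cdot\delta^0)q_j\end{pmatrix}\otimes\alpha_j\in\mathbb M^{4\times 2}$, and $Z^\nu_1(Y)=\kappa_\nu C_\nu(Y)$. The space $\mathbb M^{4\times 2}$ is identified with $\mathbb R^8$ by stacking columns: $(x_{ik})\mapsto(x_{11},x_{21},x_{31},x_{41},x_{12},x_{22},x_{32},x_{42})$. *)

(* Defs.v *)
From HB Require Import structures.
From mathcomp Require Import all_boot all_order all_algebra.
From mathcomp Require Import all_classical all_reals all_analysis.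
Set Implicit Arguments. Unset Strict Implicit. Unset Printing Implicit Defensive.
Import Order.TTheory GRing.Theory Num.Theory.
Import numFieldNormedType.Exports.
Local Open Scope ring_scope.

(* Coordinates of Y in R^20, in the order
   (z1, y2, z3, z4, y5, p3, p4, p5, q4, q5, kappa1, ..., kappa5),
   indices 0..19:  z1=0 y2=1 z3=2 z4=3 y5=4 p3=5,6 p4=7,8 p5=9,10
   q4=11,12 q5=13,14 kappa_j = 14 + j (j = 1..5). *)
Section Defs.
Variable R : realType.
Implicit Type Y : 'rV[R]_20.

Definition Yc Y (k : nat) : R := Y 0 (inord k).

Definition z1 Y := Yc Y 0.
Definition y2 Y := Yc Y 1.
Definition z3 Y := Yc Y 2.
Definition z4 Y := Yc Y 3.
Definition y5 Y := Yc Y 4.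
(* second argument k in {0,1}: component of the vector in R^2 *)
Definition p3 Y k := Yc Y (5 + k).
Definition p4 Y k := Yc Y (7 + k).
Definition p5 Y k := Yc Y (9 + k).
Definition q4 Y k := Yc Y (11 + k).
Definition q5 Y k := Yc Y (13 + k).
Definition kappa Y (j : nat) := Yc Y (14 + j).

Definition alpha Y (j k : nat) : R :=
  match j with
  | 1 => if k == 0%N then -1 else z1 Y
  | 2 => if k == 0%N then y2 Y else -1
  | 3 => if k == 0%N then 1 else z3 Y
  | 4 => if k == 0%N then 1 else z4 Y
  | _ => if k == 0%N then y5 Y else 1
  end.

(* alpha_j . delta^0 with delta^0 = (1,1) *)
Definition alpha_dot_delta0 Y j := alpha Y j 0 * 1 + alpha Y j 1 * 1.

Definition pvec Y (j k : nat) : R :=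
  let a := z1 Y in let b := y2 Y in let c := z3 Y in
  let d := z4 Y in let e := y5 Y in
  match j with
  | 1 => (b * c + 1) / (1 - b * a) * p3 Y k
         + (b * d + 1) / (1 - b * a) * p4 Y k
         + (b + e) / (1 - b * a) * p5 Y k
  | 2 => (a + c) / (1 - b * a) * p3 Y k
         + (a + d) / (1 - b * a) * p4 Y k
         + (e * a + 1) / (1 - b * a) * p5 Y k
  | 3 => p3 Y k
  | 4 => p4 Y k
  | _ => p5 Y k
  end.

Definition qvec Y (j k : nat) : R :=
  let a := z1 Y in let b := y2 Y in let c := z3 Y in
  let d := z4 Y in let e := y5 Y in
  match j with
  | 1 => (b * d + 1) * (c - d) / ((a + c) * (b * a - 1)) * q4 Y k
         + (b + e) * (e * c - 1) / ((a + c) * (b * a - 1)) * q5 Y k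
  | 2 => - ((a + d) * (c - d) / ((b * a - 1) * (b * c + 1))) * q4 Y k
         - ((e * a + 1) * (e * c - 1) / ((b * a - 1) * (b * c + 1))) * q5 Y k
  | 3 => - ((a + d) * (b * d + 1) / ((a + c) * (b * c + 1))) * q4 Y k
         - ((b + e) * (e * a + 1) / ((a + c) * (b * c + 1))) * q5 Y k
  | 4 => q4 Y k
  | _ => q5 Y k
  end.

Definition Cvec Y (j i : nat) : R :=
  if (i < 2)%N then pvec Y j i else alpha_dot_delta0 Y j * qvec Y j (i - 2).

Definition Cmat Y (j i k : nat) : R := Cvec Y j i * alpha Y j k.

(* Z^nu_1(Y) = kappa_nu C_nu(Y), flattened by stacking columns:
   entry l (0-based) corresponds to (i, k) = (l mod 4, l div 4). *)
Definition Z1 (nu : nat) (Y : 'rV[R]_20) : 'rV[R]_8 :=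
  \row_(l < 8) (kappa Y nu * Cmat Y nu (l %% 4) (l %/ 4)).

Definition jacobianZ (f : 'rV[R]_20 -> 'rV[R]_8) (Y : 'rV[R]_20) : 'M[R]_(8, 20) :=
  \matrix_(l < 8, m < 20) ('D_(delta_mx 0 m : 'rV[R]_20) f Y) 0 l.

Definition in_domain Y : Prop :=
  1 - y2 Y * z1 Y != 0 /\ z1 Y + z3 Y != 0 /\ y2 Y * z3 Y + 1 != 0.

End Defs.

(* Main.v *)
Require Import Defs.
From HB Require Import structures.
From mathcomp Require Import all_boot all_order all_algebra.
From mathcomp Require Import all_classical all_reals all_analysis.
Import Order.TTheory GRing.Theory Num.Theory.
Import numFieldNormedType.Exports.
Local Open Scope ring_scope.

Section S.
Variable R : realType.
Notation X := 'rV[R]_20.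
Implicit Types (f g : X -> R) (x v : X).

Lemma dD f g x v : derivable f x v -> derivable g x v -> derivable (fun y => f y + g y) x v.
Proof. exact: derivableD. Qed.
Lemma dB f g x v : derivable f x v -> derivable g x v -> derivable (fun y => f y - g y) x v.
Proof. exact: derivableB. Qed.
Lemma dM f g x v : derivable f x v -> derivable g x v -> derivable (fun y => f y * g y) x v.
Proof. exact: derivableM. Qed.
Lemma dN f x v : derivable f x v -> derivable (fun y => - f y) x v.
Proof. exact: derivableN. Qed.
Lemma dV f x v : f x != 0 -> derivable f x v -> derivable (fun y => (f y)^-1) x v.
Proof. exact: derivableV. Qed.
Lemma dC (c : R) x v : derivable (fun _ : X => c) x v.
Proof. exact: derivable_cst. Qed.
Lemma dY (k : nat) x v : derivable (fun y : X => Yc y k) x v.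
Proof. apply: diff_derivable; exact: differentiable_coord. Qed.

Ltac dstep := lazymatch goal with
  | |- derivable (fun y => @?f y + @?g y) _ _ => apply: (dD f g)
  | |- derivable (fun y => @?f y - @?g y) _ _ => apply: (dB f g)
  | |- derivable (fun y => @?f y * @?g y) _ _ => apply: (dM f g)
  | |- derivable (fun y => - @?f y) _ _ => apply: (dN f)
  | |- derivable (fun y => (@?f y)^-1) _ _ => apply: (dV f)
  | |- derivable (fun y => Yc y _) _ _ => apply: dY
  | |- derivable (fun y => _) _ _ => apply: dC
  end.
Ltac dtac := repeat (dstep; try done).

Definition PP (nu i : nat) (y : X) := kappa y nu * Cvec y nu i.

Lemma dPP x v (nu i : nat) (H : in_domain x) : derivable (PP nu i) x v.
Proof.
rewrite /PP.
case: H; rewrite /z1 /y2 /z3 => h1 [h2 h3].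
have h1' : Yc x 1 * Yc x 0 - 1 != 0 by rewrite -opprB oppr_eq0.
have h4 : (Yc x 0 + Yc x 2) * (Yc x 1 * Yc x 0 - 1) != 0 by rewrite mulf_neq0.
have h5 : (Yc x 1 * Yc x 0 - 1) * (Yc x 1 * Yc x 2 + 1) != 0 by rewrite mulf_neq0.
have h6 : (Yc x 0 + Yc x 2) * (Yc x 1 * Yc x 2 + 1) != 0 by rewrite mulf_neq0.
apply dM; first by apply dY.
rewrite /Cvec; case: (i < 2)%N.
  case: nu => [|[|[|[|[|nu]]]]] /=; rewrite /pvec /p3 /p4 /p5 /z1 /y2 /z3 /z4 /y5 /=; dtac.
apply dM.
  case: nu => [|[|[|[|[|nu]]]]] /=; rewrite /alpha_dot_delta0 /alpha /z1 /y2 /z3 /z4 /y5 /=; dtac.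
case: nu => [|[|[|[|[|nu]]]]] /=; rewrite /qvec /q4 /q5 /z1 /y2 /z3 /z4 /y5 /=; dtac.
Qed.

Lemma dAl x v (nu k : nat) : derivable (fun y => alpha y nu k) x v.
Proof.
rewrite /alpha; case: nu => [|[|[|[|[|nu]]]]] /=; case: (k == 0)%N; rewrite /z1 /y2 /z3 /z4 /y5; dtac.
Qed.

Definition k1 (nu : nat) : nat := match nu with 1 | 3 | 4 => 1 | _ => 0 end.

Lemma alpha_k0 nu (y y' : X) : alpha y nu (1 - k1 nu) = alpha y' nu (1 - k1 nu).
Proof. by case: nu => [|[|[|[|[|nu]]]]]. Qed.

Lemma dMe f g x v : derivable f x v -> derivable g x v ->
  'D_v (fun y => f y * g y) x = f x * 'D_v g x + g x * 'D_v f x.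
Proof. exact: deriveM. Qed.

Lemma Z1E nu (y : X) i j : Z1 nu y i j = PP nu (j %% 4) y * alpha y nu (j %/ 4).
Proof. by rewrite /Z1 mxE /Cmat /PP mulrA. Qed.

Lemma dAlE (nu k : nat) x v : (k < 2)%N ->
  'D_v (fun y => alpha y nu k) x = if k == k1 nu then 'D_v (fun y => alpha y nu (k1 nu)) x else 0.
Proof.
move=> hk; case: eqP => [->//|hne].
have -> : k = (1 - k1 nu)%N.
  have hk1 : (k1 nu < 2)%N by case: nu {hne} => [|[|[|[|[|nu]]]]].
  by move: hk hne hk1; case: (k1 nu) => [|[|k']]; case: k => [|[|k]].
have -> : (fun y => alpha y nu (1 - k1 nu)) = cst (alpha x nu (1 - k1 nu)).
  by apply/funext => y; rewrite /= (alpha_k0 nu y x).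
exact: derive_cst.
Qed.


End S.
Arguments PP {R}.

Theorem lemma3p2 (R : realType) (nu : nat) (Y : 'rV[R]_20) :
  (1 <= nu <= 5)%N -> in_domain Y ->
  (\rank (jacobianZ (Z1 nu) Y) <= 5)%N.
Proof.
move=> _ HY.
pose e (m : 'I_20) := (delta_mx 0 m : 'rV[R]_20).
pose G : 'M[R]_(5,20) := \matrix_(r < 5, m < 20)
  (if (r < 4)%N then 'D_(e m) (PP nu r) Y else 'D_(e m) (fun y => alpha y nu (k1 nu)) Y).
pose M : 'M[R]_(8,5) := \matrix_(l < 8, r < 5)
  (if (r < 4)%N then (if (r == l %% 4 :> nat)%N then alpha Y nu (l %/ 4) else 0)
   else (if (l %/ 4 == k1 nu)%N then PP nu (l %% 4) Y else 0)).
suff -> : jacobianZ (Z1 nu) Y = M *m G.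
  exact: leq_trans (mxrankM_maxr _ _) (rank_leq_row _).
apply/matrixP => l m; rewrite !mxE.
have dZ : derivable (Z1 nu) Y (e m).
  apply/derivable_mxP => i j.
  have -> : (fun x : 'rV[R]_20 => Z1 nu x i j) = (fun x => PP nu (j %% 4) x * alpha x nu (j %/ 4)).
    by apply: boolp.funext => x; rewrite Z1E.
  by apply: dM; [apply: dPP | apply: dAl].
rewrite (derive_mx dZ) mxE.
have -> : (fun x : 'rV[R]_20 => Z1 nu x 0 l) = (fun x => PP nu (l %% 4) x * alpha x nu (l %/ 4)).
  by apply: boolp.funext => x; rewrite Z1E.
rewrite dMe; [|apply: dPP => //|apply: dAl].
rewrite dAlE; last by case: l => [[|[|[|[|[|[|[|[|//]]]]]]]]].
rewrite /M /G big_ord_recr /= !mxE /=.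
have l4 : (l %% 4 < 4)%N by rewrite ltn_pmod.
rewrite (bigD1 (Ordinal l4)) //= !mxE /= eqxx l4.
rewrite big1 ?addr0; last first.
  move=> j hj; rewrite !mxE /= ltn_ord ifF ?mul0r //.
  by apply/negbTE; apply: contraNN hj => /eqP h; apply/eqP/val_inj.
case: ifP => _; rewrite ?mulr0 ?mul0r ?addr0 ?add0r; last by rewrite mulrC.
by rewrite addrC mulrC [_ * PP _ _ _]mulrC.
Qed.
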